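(* Let $q$ be a prime power and $\ell$ an odd prime with $\gcd(\ell,q)=1$, and let $m$ be a positive integer. Assume $f=\mathrm{ord}_\ell(q)$ is odd. Let $g$ be a fixed generator of the cyclic group $\mathbb Z_{\ell^m}^*$. For $1\le r\le m$ let $\lambda(r)=\mathrm{ord}_{\ell^r}(q)$ and $\delta(r)=\phi(\ell^r)/\lambda(r)$, where $\phi$ is Euler's function. Then the sets $C_0=\{0\}$, $$C_{\ell^{m-r}g^k}=\{\ell^{m-r}g^k,\ell^{m-r}g^kq,\dots,\ell^{m-r}g^kq^{\lambda(r)-1}\},\qquad C_{-\ell^{m-r}g^k}=\{-\ell^{m-r}g^k,-\ell^{m-r}g^kq,\dots,-\ell^{m-r}g^kq^{\lambda(r)-1}\},$$ for $1\le r\le m$ and $0\le k\le\frac{\delta(r)}{2}-1$ (elements taken modulo $\ell^m$), are pairwise distinct and constitute all the distinct $q$-cyclotomic cosets modulo $\ell^m$.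
   Context: The $q$-cyclotomic coset of an integer $t$ modulo $\ell^m$ is $C_t=\{tq^i \bmod \ell^m: i\ge0\}$. *)

(* Defs.v *)
From mathcomp Require Import all_boot all_order all_algebra.
Set Implicit Arguments. Unset Strict Implicit. Unset Printing Implicit Defensive.
Import GRing.Theory.
Local Open Scope ring_scope.

Definition is_prime_power (q : nat) : Prop :=
  exists p k : nat, prime p /\ (0 < k)%N /\ q = (p ^ k)%N.

(* Multiplicative order of a modulo n: the least k >= 1 with a^k = 1 (mod n).
   (For coprime a, n >= 1 such k exists and is <= n, so the search over
   1..n finds it; for non-coprime a the value is irrelevant.) *)
Definition ordmod (n a : nat) : nat :=
  (find (fun k => a ^ k.+1 == 1 %[mod n]) (iota 0 n)).+1.

Definition cyc_coset (n q : nat) (t : 'Z_n) : 'Z_n -> Prop :=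
  fun x => exists i : nat, x = t * (q%:R) ^+ i.

Definition same_set (n : nat) (A B : 'Z_n -> Prop) : Prop :=
  forall x, A x <-> B x.

Definition coset_rep (l m g r k : nat) (s : bool) : 'Z_(l ^ m) :=
  let t : 'Z_(l ^ m) := ((l ^ (m - r) * g ^ k)%N)%:R in if s then - t else t.

Definition lam (l q r : nat) : nat := ordmod (l ^ r) q.
Definition dlt (l q r : nat) : nat := (totient (l ^ r) %/ lam l q r)%N.

Definition valid_idx (l q m r k : nat) : bool :=
  [&& (1 <= r)%N, (r <= m)%N & (k < dlt l q r %/ 2)%N].

(* Main.v *)
Require Import Defs.
From mathcomp Require Import all_boot all_order all_algebra all_fingroup all_solvable.
From mathcomp Require Import zify ring.
Set Implicit Arguments. Unset Strict Implicit. Unset Printing Implicit Defensive.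
Import GRing.Theory.

Lemma totient_ltn n : (1 < n)%N -> (totient n < n)%N.
Proof.
move=> n1; rewrite totient_count_coprime big_ltn ?(ltnW n1) //.
rewrite /coprime gcdn0 gtn_eqF // add0n.
have H : (\sum_(1 <= i < n) coprime n i <= \sum_(1 <= i < n) 1)%N.
  by apply: leq_sum => i _; exact: leq_b1.
apply: leq_ltn_trans H _.
by rewrite sum_nat_const_nat muln1 subn1 prednK ?(ltnW n1).
Qed.

Section Ord.
Variables (n a : nat).
Hypothesis n_gt1 : (1 < n)%N.
Hypothesis co : coprime a n.

Let P := (fun k => a ^ k.+1 == 1 %[mod n]).

Lemma ordmod_has : has P (iota 0 n).
Proof.
apply/hasP; exists (totient n).-1.
  rewrite mem_iota add0n /=; apply: leq_ltn_trans (leq_pred _) _.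
  exact: totient_ltn.
by rewrite /P prednK ?totient_gt0 ?(ltnW n_gt1) // Euler_exp_totient.
Qed.

Lemma ordmod_lt : (ordmod n a <= n)%N.
Proof. by have := ordmod_has; rewrite has_find size_iota. Qed.

Lemma ordmod_exp : a ^ ordmod n a = 1 %[mod n].
Proof.
have := nth_find 0 ordmod_has; rewrite nth_iota; last first.
  by have := ordmod_has; rewrite has_find size_iota.
by rewrite add0n => /eqP.
Qed.

Lemma ordmod_min j : (0 < j < ordmod n a)%N -> a ^ j != 1 %[mod n].
Proof.
case: j => // j /andP [_ hj].
have := before_find 0 hj; rewrite nth_iota; last first.
  by apply: leq_trans ordmod_lt; apply: ltnW.
by rewrite add0n /P => ->.
Qed.



Lemma ordmodP k : (a ^ k == 1 %[mod n]) = (ordmod n a %| k)%N.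
Proof.
set o := ordmod n a.
have ex : forall c, a ^ (o * c) = 1 %[mod n].
  move=> c; rewrite expnM -modnXm ordmod_exp modnXm exp1n //.
apply/idP/idP; last first.
  by move/dvdnP=> [c ->]; rewrite mulnC ex.
move=> /eqP h; rewrite /dvdn; apply/negPn/negP => nz.
have: a ^ (k %% o) == 1 %[mod n].
  rewrite -h {2}(divn_eq k o) (mulnC (k %/ o) o) expnD -modnMml ex modnMml mul1n //.
by apply/negP/ordmod_min; rewrite lt0n nz ltn_pmod.
Qed.
End Ord.
Local Open Scope ring_scope.
Section Bridge.
Variable n : nat.
Hypothesis n_gt1 : (1 < n)%N.

Lemma Zp_natE (a b : nat) : ((a%:R : 'Z_n) == b%:R) = (a == b %[mod n]).
Proof. by rewrite -val_eqE /= !val_Zp_nat. Qed.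

Lemma Zp_nat0 (a : nat) : ((a%:R : 'Z_n) == 0) = (n %| a)%N.
Proof. by rewrite -[0]/(0%:R) Zp_natE mod0n. Qed.

Lemma Zp_int0 (z : int) : ((z%:~R : 'Z_n) == 0) = (n%:Z %| z)%Z.
Proof.
case: z => k; first by rewrite Zp_nat0.
by rewrite NegzE mulrNz oppr_eq0 Zp_nat0 dvdzE abszN.
Qed.

Lemma Zp_intE (a b : int) : ((a%:~R : 'Z_n) == b%:~R) = (a == b %[mod n%:Z])%Z.
Proof. by rewrite -subr_eq0 -intrB Zp_int0 eqz_mod_dvd. Qed.

Definition toU (a : nat) : {unit 'Z_n} := insubd (1%g : {unit 'Z_n}) (a%:R : 'Z_n).

Lemma val_toU a : coprime a n -> val (toU a) = a%:R.
Proof. by move=> co; rewrite /toU insubdK // unfold_in unitZpE // coprime_sym. Qed.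

Lemma toU_X a k : coprime a n -> (toU a ^+ k)%g = toU (a ^ k).
Proof.
move=> co; apply: val_inj; rewrite FinRing.val_unitX !val_toU ?coprimeXl //.
by rewrite natrX.
Qed.

Lemma toU_eq a b : coprime a n -> coprime b n -> (toU a == toU b) = (a == b %[mod n]).
Proof. by move=> ca cb; rewrite -val_eqE /= !val_toU // Zp_natE. Qed.

Lemma toU1 : toU 1 = 1%g.
Proof. by apply: val_inj; rewrite val_toU ?coprime1n. Qed.

Lemma order_toU a : coprime a n -> #[toU a]%g = ordmod n a.
Proof.
move=> co; have key k : (#[toU a]%g %| k)%N = (ordmod n a %| k)%N.
  rewrite order_dvdn toU_X // -toU1 toU_eq ?coprimeXl ?coprime1n //.
  exact: ordmodP.
by apply/eqP; rewrite eqn_dvd key dvdnn -key dvdnn.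
Qed.

Lemma toU_val (u : {unit 'Z_n}) : coprime (val (val u)) n /\ u = toU (val (val u)).
Proof.
have co : coprime (val (val u)) n.
  by rewrite coprime_sym -unitZpE // natr_Zp (valP u).
split=> //; apply: val_inj; rewrite val_toU // natr_Zp //.
Qed.

Lemma cardU : #|[set: {unit 'Z_n}]| = totient n.
Proof. by rewrite -card_units_Zp // ltnW. Qed.

Lemma gen_all a : coprime a n -> ordmod n a = totient n ->
  <[toU a]>%g = [set: {unit 'Z_n}].
Proof.
move=> co ho; apply/eqP; rewrite eqEcard subsetT cardU -ho -order_toU //.
exact: leqnn.
Qed.

Lemma gen_surj a : coprime a n -> ordmod n a = totient n ->
  forall b, coprime b n -> exists k, a ^ k = b %[mod n].
Proof.
move=> co ho b cb; have : toU b \in <[toU a]>%g by rewrite gen_all // inE.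
case/cycleP => k /eqP; rewrite toU_X // eq_sym toU_eq ?coprimeXl // => /eqP.
by exists k.
Qed.

Lemma surj_gen a : coprime a n ->
  (forall b, coprime b n -> exists k, a ^ k = b %[mod n]) -> ordmod n a = totient n.
Proof.
move=> co hs; rewrite -order_toU // -cardU; apply/eqP; rewrite eqn_leq.
apply/andP; split; first exact: subset_leq_card (subsetT _).
apply: subset_leq_card; apply/subsetP => u _.
have [cu ->] := toU_val u; have [k hk] := hs _ cu.
apply/cycleP; exists k; rewrite toU_X //; apply/eqP; rewrite toU_eq ?coprimeXl //.
by apply/eqP.
Qed.
End Bridge.

Local Close Scope ring_scope.

Lemma mulUC n (u v : {unit 'Z_n}) : (u * v = v * u)%g.
Proof. exact: unit_Zp_mulgC. Qed.

Lemma rearr n (P A B X : {unit 'Z_n}) : (P * A * B * (X * P^-1) = X * (A * B))%g.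
Proof.
rewrite [(X * _)%g]mulUC !mulgA -[(P * A * B)%g]mulgA [(P * (A * B))%g]mulUC mulgK.
by rewrite [(A * B * X)%g]mulUC mulgA.
Qed.

Lemma eqmod_dvd d m a b : d %| m -> a = b %[mod m] -> a = b %[mod d].
Proof. by move=> dm h; rewrite -(modn_dvdm a dm) h modn_dvdm. Qed.

Section Main.
Variables q l m g : nat.
Hypotheses (pl : prime l) (ol : odd l) (clq : coprime l q) (m_gt0 : 0 < m)
  (hf : odd (ordmod l q)) (cgl : coprime g l)
  (og : ordmod (l ^ m) g = totient (l ^ m)).

Lemma l_gt2 : 2 < l.
Proof.
have := prime_gt1 pl; rewrite leq_eqVlt => /orP [/eqP l2|//].
by move: ol; rewrite -l2.
Qed.

Lemma lr_gt1 r : 0 < r -> 1 < l ^ r.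
Proof. by move=> r0; rewrite -(exp1n r) ltn_exp2r // prime_gt1. Qed.

Lemma cop_lr a r : 0 < r -> coprime a (l ^ r) = coprime a l.
Proof. by move=> r0; rewrite coprime_pexpr. Qed.

Lemma gen_r r : 0 < r -> r <= m -> ordmod (l ^ r) g = totient (l ^ r).
Proof.
move=> r0 rm; apply: surj_gen; first exact: lr_gt1.
  by rewrite cop_lr.
move=> b; rewrite cop_lr // => cb.
have cg : coprime g (l ^ m) by rewrite cop_lr.
have cb' : coprime b (l ^ m) by rewrite cop_lr.
have [k hk] := gen_surj (lr_gt1 m_gt0) cg og cb'.
by exists k; apply: eqmod_dvd hk; rewrite dvdn_exp2l.
Qed.

Lemma half_mult c p : c < p -> p %| c * 2 -> c = 0 \/ c * 2 = p.
Proof.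
move=> cp /dvdnP [k hk]; case: k hk => [|[|k]] hk; [left; lia | right; lia | exfalso; nia].
Qed.

Lemma dvd_lr r : 0 < r -> l %| l ^ r.
Proof. by move=> r0; rewrite -{1}(expn1 l) dvdn_exp2l. Qed.

Section Level.
Variable r : nat.
Hypotheses (r0 : 0 < r) (rm : r <= m).
Let n := l ^ r.
Let n1 : 1 < n := lr_gt1 r0.
Let n2 : 2 < n.
Proof. apply: leq_trans l_gt2 _; by rewrite /n -{1}(expn1 l) leq_exp2l ?prime_gt1. Qed.
Let x := toU n g.
Let y := toU n q.
Let w := toU n n.-1.
Let phi := totient n.

Let cxn : coprime g n. Proof. by rewrite cop_lr. Qed.
Let cqn : coprime q n. Proof. by rewrite cop_lr // coprime_sym. Qed.
Let cwn : coprime n.-1 n.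
Proof. by rewrite -{2}(prednK (ltnW n1)) coprimenS. Qed.

Lemma ox : #[x]%g = phi.
Proof. by rewrite order_toU // gen_r. Qed.

Lemma allx : <[x]>%g = [set: {unit 'Z_n}].
Proof. by rewrite gen_all // gen_r. Qed.

Lemma phi_gt0 : 0 < phi.
Proof. by rewrite totient_gt0 ltnW. Qed.

Lemma val_w : val w = (- 1)%R :> 'Z_n.
Proof.
rewrite val_toU //; apply/eqP.
rewrite -subr_eq0 opprK natr1 prednK ?(ltnW n1) //.
by rewrite pchar_Zp.
Qed.

Lemma w2 : (w ^+ 2 = 1)%g.
Proof. by apply: val_inj; rewrite FinRing.val_unitX val_w FinRing.val_unit1 expr2 mulrNN mulr1. Qed.

Lemma wn1 : w != 1%g.
Proof.
apply/eqP => /(congr1 val); rewrite val_w FinRing.val_unit1 => /eqP.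
rewrite eq_sym -addr_eq0 -[(1 + 1)%R]/((2%:R)%R) (Zp_nat0 n1) => /dvdn_leq.
by move/(_ isT); rewrite leqNgt n2.
Qed.

Lemma sq1 z : (z ^+ 2 = 1)%g -> z = 1%g \/ z = w.
Proof.
have zmem u : u \in <[x]>%g by rewrite allx inE.
have sq c : c < phi -> (x ^+ c ^+ 2 = 1)%g -> c = 0 \/ c * 2 = phi.
  move=> cp h; apply: half_mult cp _; rewrite -ox order_dvdn expgM; exact/eqP.
have [e ep we] := cyclePmin (zmem w); rewrite ox in ep.
have [c cp zc] := cyclePmin (zmem z); rewrite ox in cp.
have [e0|e2] := sq e ep (etrans (congr1 (fun t => t ^+ 2)%g (esym we)) w2).
  by move: wn1; rewrite we e0 expg0 eqxx.
move=> z2; have [c0|c2] := sq c cp (etrans (congr1 (fun t => t ^+ 2)%g (esym zc)) z2).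
  by left; rewrite zc c0 expg0.
by right; rewrite zc we; congr (_ ^+ _)%g; lia.
Qed.


Lemma w_exp : exists2 h, h * 2 = phi & w = (x ^+ h)%g.
Proof.
have zmem u : u \in <[x]>%g by rewrite allx inE.
have [e ep we] := cyclePmin (zmem w); rewrite ox in ep.
have : phi %| e * 2 by rewrite -ox order_dvdn expgM -we w2.
case/(half_mult ep) => [e0|e2]; last by exists e.
by move: wn1; rewrite we e0 expg0 eqxx.
Qed.

Lemma ymem : y \in <[x]>%g. Proof. by rewrite allx inE. Qed.
Definition bb := sval (cyclePmin ymem).
Lemma yb : y = (x ^+ bb)%g.
Proof. by rewrite /bb; case: (cyclePmin ymem). Qed.

Let lm := ordmod n q.
Let d := gcdn phi bb.

Lemma oy : #[y]%g = lm. Proof. exact: order_toU. Qed.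
Lemma lam_gt0 : 0 < lm. Proof. exact: ltn0Sn. Qed.
Lemma lam_d : lm = phi %/ d. Proof. by rewrite -oy yb orderXgcd ox. Qed.
Lemma d_gt0 : 0 < d. Proof. by rewrite gcdn_gt0 phi_gt0. Qed.
Lemma phi_dl : phi = d * lm.
Proof. by rewrite lam_d mulnC divnK // dvdn_gcdl. Qed.

Lemma lam_odd : odd lm.
Proof.
case: (boolP (odd lm)) => // ev.
have lj : lm = lm./2 * 2 by rewrite -[LHS]odd_double_half (negbTE ev) add0n -muln2.
set j := lm./2 in lj.
have j0 : 0 < j by move: lam_gt0; rewrite lj muln_gt0 andbT.
have jl : j < lm by rewrite lj -{1}(muln1 j) ltn_pmul2l.
have yj1 : (y ^+ j)%g != 1%g.
  apply/negP; rewrite -order_dvdn oy => /(dvdn_leq j0); by rewrite leqNgt jl.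
have yj2 : ((y ^+ j) ^+ 2 = 1)%g by rewrite -expgM -lj -oy expg_order.
have := sq1 yj2; case=> [/eqP|]; first by rewrite (negbTE yj1).
rewrite /y toU_X // => /eqP; rewrite toU_eq ?coprimeXl // => /eqP h1.
have {}h1 := eqmod_dvd (dvd_lr r0) h1.
have h2 : q ^ lm = 1 %[mod l] by apply: eqmod_dvd (dvd_lr r0) _; exact: ordmod_exp.
have cql : coprime q l by rewrite coprime_sym.
move: h2 => /eqP; rewrite (ordmodP (prime_gt1 pl) cql) lj Gauss_dvdl ?coprimen2 //.
rewrite -(ordmodP (prime_gt1 pl) cql) => /eqP h3.
have : (n.-1 + 1) %% l = (1 + 1) %% l by rewrite -modnDml -h1 h3 modnDml.
rewrite addn1 prednK ?(ltnW n1) //.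
have /eqP -> : n %% l == 0 by rewrite -/(dvdn l n) dvd_lr.
by rewrite modn_small ?l_gt2.
Qed.

Lemma d_even : 2 %| d.
Proof.
have [h h2 _] := w_exp.
have : 2 %| d * lm by rewrite -phi_dl -h2 dvdn_mull.
by rewrite Gauss_dvdl // coprime_sym coprimen2 lam_odd.
Qed.

Lemma xd_mem : (x ^+ d)%g \in <[y]>%g.
Proof.
have [t _ ht] := Bezoutl bb phi_gt0.
have h1 : (x ^+ (d + t * bb)%N = 1)%g by apply/eqP; rewrite -order_dvdn ox.
have -> : (x ^+ d = (y ^+ t)^-1)%g.
  by rewrite -(mulgK (y ^+ t)%g (x ^+ d)%g) yb -expgM mulnC -expgD h1 mul1g.
by rewrite groupV mem_cycle.
Qed.

Lemma memy c : d %| c -> (x ^+ c)%g \in <[y]>%g.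
Proof. by case/dvdnP=> k ->; rewrite mulnC expgM groupX // xd_mem. Qed.

Lemma dlt_d : dlt l q r = d.
Proof. by rewrite /dlt /lam -/n -/lm -/phi phi_dl mulnK // lam_gt0. Qed.

Lemma lam_e : lam l q r = lm. Proof. by []. Qed.

Lemma w_d : exists L, w = (x ^+ (d * L + d./2))%g.
Proof.
have [h h2 ->] := w_exp; exists lm./2; congr (_ ^+ _)%g.
have := odd_double_half lm; rewrite lam_odd => hl.
have := odd_double_half d; have := d_even; rewrite dvdn2 => /negbTE -> hd.
move: h2; rewrite phi_dl -hl -{1}hd /=; rewrite -!muln2; nia.
Qed.



Lemma coverU (u : {unit 'Z_n}) :
  exists k (s : bool) i, k < d./2 /\ u = (w ^+ s * x ^+ k * y ^+ i)%g.
Proof.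
have : u \in <[x]>%g by rewrite allx inE.
case/cycleP => a ->.
have hd := odd_double_half d; move: (d_even); rewrite dvdn2 => /negbTE ev.
rewrite ev add0n in hd.
have [L hL] := w_d.
rewrite (divn_eq a d) expgD.
have z1 : (x ^+ (a %/ d * d))%g \in <[y]>%g by apply: memy; exact: dvdn_mull.
have ad : a %% d < d by rewrite ltn_pmod ?d_gt0.
case: (ltnP (a %% d) d./2) => hk.
  case/cycleP: z1 => i hi; exists (a %% d), false, i; split=> //.
  by rewrite expg0 mul1g hi mulUC.
have z2 : ((x ^+ (d * L))^-1)%g \in <[y]>%g by rewrite groupV memy // dvdn_mulr.
have := groupM z1 z2; case/cycleP => i hi.
exists (a %% d - d./2), true, i; split; first by move: hd; lia.
by rewrite -hi expg1 hL expgD rearr -[in RHS]expgD (subnKC hk).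
Qed.

Lemma uniqU k k' (s s' : bool) i : k < d./2 -> k' < d./2 ->
  (w ^+ s' * x ^+ k' = w ^+ s * x ^+ k * y ^+ i)%g -> s = s' /\ k = k'.
Proof.
move=> hk hk'.
have [L hL] := w_d.
have hd := odd_double_half d; move: (d_even); rewrite dvdn2 => /negbTE ev.
rewrite ev add0n in hd.
have hb : bb = bb %/ d * d by rewrite divnK // dvdn_gcdr.
rewrite hL yb -!expgM -!expgD => /eqP; rewrite eq_expg_mod_order ox => /eqP h.
have := eqmod_dvd (dvdn_gcdl phi bb : d %| phi) h; clear h.
have e1 : (d * L + d./2) * s' + k' = (L * s') * d + (d./2 * s' + k') by ring.
have e2 : (d * L + d./2) * s + k + bb * i = (L * s + bb %/ d * i) * d + (d./2 * s + k).
  by rewrite {1}hb; ring.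
rewrite e1 e2 !modnMDl !modn_small; clear e1 e2; last 2 first.
- by case: s; move: hd; lia.
- by case: s'; move: hd; lia.
by case: s; case: s' => /=; lia.
Qed.

End Level.
End Main.

Local Open Scope ring_scope.

Definition sgn (s : bool) : int := if s then -1 else 1.

Lemma R_int l m g r k s : coset_rep l m g r k s = (sgn s * (l ^ (m - r) * g ^ k)%N%:Z)%:~R.
Proof. by case: s; rewrite /coset_rep /sgn intrM /= ?intrN ?mulN1r ?mul1r. Qed.

Lemma coset_sym n (q : nat) (t t' : 'Z_n) L i : (0 < L)%N -> (q%:R : 'Z_n) ^+ L = 1 ->
  t' = t * (q%:R) ^+ i -> same_set (cyc_coset q t) (cyc_coset q t').
Proof.
move=> L0 hL -> x; split=> [[j ->]|[j ->]].
  exists (i * L.-1 + j)%N; rewrite -mulrA -exprD; congr (_ * _).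
  rewrite addnA -{1}(muln1 i) -mulnDr add1n prednK // exprD exprM.
  by rewrite -exprM mulnC exprM hL expr1n mul1r.
by exists (i + j)%N; rewrite exprD mulrA.
Qed.

Lemma sgn_sq s : sgn s * sgn s = 1.
Proof. by case: s. Qed.

Lemma abs_sgn s : `|sgn s|%N = 1%N. Proof. by case: s. Qed.

Lemma val_contra (l m a c : nat) (e : int) : (1 < l)%N -> coprime c l -> `|e|%N = 1%N ->
  ((l ^ m)%N%:Z %| e * (l ^ a * c)%N%:Z)%Z -> (m <= a)%N.
Proof.
move=> l1 cl he; rewrite dvdzE abszM he mul1n /=.
rewrite Gauss_dvdl; first by rewrite dvdn_Pexp2l.
by rewrite coprime_sym coprimeXr.
Qed.

Lemma mulmod_l (M c a b : int) : (a == b %[mod M])%Z -> (c * a == c * b %[mod M])%Z.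
Proof. by rewrite !eqz_mod_dvd -mulrBr; apply: dvdz_mull. Qed.

Lemma cancel_l (c M a b : int) : c != 0 -> (c * a == c * b %[mod c * M])%Z -> (a == b %[mod M])%Z.
Proof. by move=> c0; rewrite !eqz_mod_dvd -mulrBr dvdz_mul2l. Qed.

Lemma natmod_int (a b n : nat) : (a == b %[mod n])%N = (a%:Z == b%:Z %[mod n%:Z])%Z.
Proof. by rewrite !modz_nat eqz_nat. Qed.

Lemma val_toU_m1 n : (1 < n)%N -> val (toU n n.-1) = - 1 :> 'Z_n.
Proof.
move=> n1; rewrite val_toU //; last by rewrite -{2}(prednK (ltnW n1)) coprimenS.
apply/eqP; rewrite -subr_eq0 opprK natr1 prednK ?(ltnW n1) //.
by rewrite pchar_Zp.
Qed.

Lemma val_expr n g q (s : bool) k i : (1 < n)%N -> coprime g n -> coprime q n ->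
  val (toU n n.-1 ^+ s * toU n g ^+ k * toU n q ^+ i)%g
  = (sgn s * (g ^ k * q ^ i)%N%:Z)%:~R.
Proof.
move=> n1 cg cq.
rewrite !FinRing.val_unitM !FinRing.val_unitX val_toU_m1 // !val_toU //.
rewrite intrM -pmulrn natrM !natrX -mulrA; congr (_ * _).
by case: s; rewrite /sgn /= ?expr1 ?expr0 ?intrN.
Qed.

Section Main2.
Variables q l m g : nat.
Hypotheses (pl : prime l) (ol : odd l) (clq : coprime l q) (m_gt0 : (0 < m)%N)
  (hf : odd (ordmod l q)) (cgl : coprime g l)
  (og : ordmod (l ^ m) g = totient (l ^ m)).

Let l1 : (1 < l)%N := prime_gt1 pl.
Let cql : coprime q l. Proof. by rewrite coprime_sym. Qed.

Lemma cover_r r (u : nat) : (0 < r)%N -> (r <= m)%N -> coprime u l ->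
  exists k (s : bool) i, (k < (dlt l q r)./2)%N /\
    (u%:Z == sgn s * (g ^ k * q ^ i)%N%:Z %[mod (l ^ r)%N%:Z])%Z.
Proof.
move=> r0 rm cu.
have n1 := lr_gt1 pl r0.
have [k [s [i [hk hu]]]] := @coverU q l m g pl ol clq m_gt0 hf cgl og r r0 rm (toU (l ^ r) u).
exists k, s, i; split; first by rewrite (@dlt_d q l m g pl clq m_gt0 cgl og r r0 rm).
rewrite -Zp_intE // -val_expr ?cop_lr // -hu val_toU ?cop_lr //.
Qed.

Lemma uniq_r r k k' (s s' : bool) i : (0 < r)%N -> (r <= m)%N ->
  (k < (dlt l q r)./2)%N -> (k' < (dlt l q r)./2)%N ->
  (sgn s' * (g ^ k')%N%:Z == sgn s * (g ^ k * q ^ i)%N%:Z %[mod (l ^ r)%N%:Z])%Z ->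
  s = s' /\ k = k'.
Proof.
move=> r0 rm hk hk' h.
have n1 := lr_gt1 pl r0.
rewrite (@dlt_d q l m g pl clq m_gt0 cgl og r r0 rm) in hk hk'.
apply: (@uniqU q l m g pl ol clq m_gt0 hf cgl og r r0 rm k k' s s' i hk hk').
rewrite -[X in X = _](mulg1) -(expg0 (toU (l ^ r) q)).
apply: val_inj; rewrite !val_expr ?cop_lr //; apply/eqP; rewrite Zp_intE //.
by rewrite expn0 muln1.
Qed.
End Main2.

Lemma same_set_sym n (A B : 'Z_n -> Prop) : same_set A B -> same_set B A.
Proof. by move=> h x; split=> /h. Qed.

Lemma lift_mod (l m r : nat) (c X Y : int) : (r <= m)%N ->
  (X == Y %[mod (l ^ r)%N%:Z])%Z ->
  (c * (l ^ (m - r))%N%:Z * X == c * (l ^ (m - r))%N%:Z * Y %[mod (l ^ m)%N%:Z])%Z.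
Proof.
move=> rm h; rewrite -!mulrA; apply: mulmod_l.
have -> : (l ^ m)%N = (l ^ (m - r) * l ^ r)%N by rewrite -expnD subnK.
by move: h; rewrite !eqz_mod_dvd PoszM -mulrBr; apply: dvdz_mul (dvdzz _).
Qed.

Lemma unlift_mod (l m r : nat) (X Y : int) : (r <= m)%N -> (0 < l)%N ->
  ((l ^ (m - r))%N%:Z * X == (l ^ (m - r))%N%:Z * Y %[mod (l ^ m)%N%:Z])%Z ->
  (X == Y %[mod (l ^ r)%N%:Z])%Z.
Proof.
move=> rm l0; have -> : (l ^ m)%N = (l ^ (m - r) * l ^ r)%N by rewrite -expnD subnK.
rewrite PoszM; apply: cancel_l.
by rewrite eqz_nat -lt0n expn_gt0 l0.
Qed.

Lemma RQ_int l m g q r k s i :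
  coset_rep l m g r k s * (q%:R : 'Z_(l ^ m)) ^+ i
  = (sgn s * (l ^ (m - r) * g ^ k)%N%:Z * (q ^ i)%N%:Z)%:~R.
Proof. by rewrite R_int [RHS]intrM -natrX pmulrn. Qed.


Theorem lemma4p3 (q l m g : nat) :
  is_prime_power q -> prime l -> odd l -> coprime l q -> (0 < m)%N ->
  odd (ordmod l q) ->
  (* g generates the cyclic group (Z/l^m Z)^* *)
  coprime g l -> ordmod (l ^ m) g = totient (l ^ m) ->
  let C := cyc_coset q in
  let R := coset_rep l m g in
  (* C_0 = {0} *)
  same_set (C 0) (fun x => x = 0) /\
  (* explicit description of the listed cosets *)
  (forall r k s, valid_idx l q m r k ->
     same_set (C (R r k s))
       (fun x => exists2 j : nat, (j < lam l q r)%N & x = R r k s * (q%:R) ^+ j)) /\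
  (* pairwise distinct *)
  (forall r k s, valid_idx l q m r k -> ~ same_set (C 0) (C (R r k s))) /\
  (forall r k s r' k' s', valid_idx l q m r k -> valid_idx l q m r' k' ->
     (r, k, s) != (r', k', s') -> ~ same_set (C (R r k s)) (C (R r' k' s'))) /\
  (* they are all the q-cyclotomic cosets modulo l^m *)
  (forall t : 'Z_(l ^ m), same_set (C t) (C 0) \/
     exists r k s, valid_idx l q m r k /\ same_set (C t) (C (R r k s))).
Proof.
move=> _ pl ol clq m0 hf cgl og C R.
have l1 := prime_gt1 pl.
have l0 := ltnW l1.
have N1 : (1 < l ^ m)%N := lr_gt1 pl m0.
have cqN : coprime q (l ^ m) by rewrite coprime_pexpr // coprime_sym.
have hQ : (q%:R : 'Z_(l ^ m)) ^+ ordmod (l ^ m) q = 1.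
  apply/eqP; rewrite -natrX -(mulr1n 1) Zp_natE //; apply/eqP; exact: ordmod_exp.
split.
  move=> x; split=> [[i ->]|->]; first by rewrite mul0r.
  by exists 0%N; rewrite mul0r.
split.
  move=> r k s /and3P [r0 rm hk] x; split; last by case=> j _ ->; exists j.
  case=> i ->; set L := lam l q r.
  have L0 : (0 < L)%N := ltn0Sn _.
  exists (i %% L)%N; first exact: ltn_pmod.
  rewrite {1}(divn_eq i L) exprD mulrA; congr (_ * _).
  rewrite RQ_int /R R_int; apply/eqP; rewrite Zp_intE //.
  rewrite -[X in (_ == X %[mod _])%Z]mulr1 PoszM mulrA.
  rewrite -!(mulrA _ (g ^ k)%N%:Z).
  apply: lift_mod => //; apply: mulmod_l; rewrite -natmod_int.
  have cq : coprime q (l ^ r) by rewrite coprime_pexpr // coprime_sym.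
  rewrite (ordmodP (lr_gt1 pl r0) cq).
  exact: (dvdn_mull _ (dvdnn L)).
split.
  move=> r k s /and3P [r0 rm hk] hs.
  have : C 0 (R r k s) by apply/hs; exists 0%N; rewrite expr0 mulr1.
  case=> i; rewrite mul0r => /eqP; rewrite /R R_int Zp_int0 //.
  move/(val_contra l1 (coprimeXl k cgl) (abs_sgn s)); lia.
split.
  move=> r k s r' k' s' /and3P [r0 rm hk] /and3P [r0' rm' hk'] ne hs.
  have : C (R r k s) (R r' k' s') by apply/hs; exists 0%N; rewrite expr0 mulr1.
  case=> i /eqP; rewrite /R RQ_int R_int Zp_intE // => h.
  rewrite divn2 in hk; rewrite divn2 in hk'.
  case: (ltngtP r r') => hr.
  - have h1 := mulmod_l (l ^ r)%N%:Z h.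
    have h2 : ((l ^ m)%N%:Z %| (l ^ r)%N%:Z * (sgn s * (l ^ (m - r) * g ^ k)%N%:Z * (q ^ i)%N%:Z))%Z.
      have eN : (l ^ m)%N = (l ^ r * l ^ (m - r))%N by rewrite -expnD subnKC.
      apply/dvdzP; exists (sgn s * (g ^ k * q ^ i)%N%:Z); rewrite eN !PoszM; ring.
    have h3 : ((l ^ m)%N%:Z %| (l ^ r)%N%:Z * (sgn s' * (l ^ (m - r') * g ^ k')%N%:Z))%Z.
      by move: h1; rewrite eqz_mod_dvd => h1; have := rpredD h1 h2; rewrite subrK.
    have e3 : (l ^ r)%N%:Z * (sgn s' * (l ^ (m - r') * g ^ k')%N%:Z)
        = sgn s' * (l ^ (r + (m - r')) * g ^ k')%N%:Z by rewrite expnD !PoszM; ring.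
    rewrite e3 in h3; have hle := val_contra l1 (coprimeXl k' cgl) (abs_sgn s') h3.
    clear -hr rm' hle; lia.
  - have h1 := mulmod_l (l ^ r')%N%:Z h.
    have h2 : ((l ^ m)%N%:Z %| (l ^ r')%N%:Z * (sgn s' * (l ^ (m - r') * g ^ k')%N%:Z))%Z.
      have eN : (l ^ m)%N = (l ^ r' * l ^ (m - r'))%N by rewrite -expnD subnKC.
      apply/dvdzP; exists (sgn s' * (g ^ k')%N%:Z); rewrite eN !PoszM; ring.
    have h3 : ((l ^ m)%N%:Z %| (l ^ r')%N%:Z * (sgn s * (l ^ (m - r) * g ^ k)%N%:Z * (q ^ i)%N%:Z))%Z.
      move: h1; rewrite eqz_mod_dvd => h1; have := rpredB h2 h1.
      by rewrite opprB addrC subrK.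
    have e3 : (l ^ r')%N%:Z * (sgn s * (l ^ (m - r) * g ^ k)%N%:Z * (q ^ i)%N%:Z)
        = sgn s * (l ^ (r' + (m - r)) * (g ^ k * q ^ i))%N%:Z by rewrite expnD !PoszM; ring.
    have cgq : coprime (g ^ k * q ^ i) l by rewrite coprimeMl !coprimeXl // coprime_sym.
    rewrite e3 in h3; have hle := val_contra l1 cgq (abs_sgn s) h3.
    clear -hr rm hle; lia.
  - subst r'.
    have e1 : sgn s' * (l ^ (m - r) * g ^ k')%N%:Z
        = (l ^ (m - r))%N%:Z * (sgn s' * (g ^ k')%N%:Z) by rewrite PoszM; ring.
    have e2 : sgn s * (l ^ (m - r) * g ^ k)%N%:Z * (q ^ i)%N%:Z
        = (l ^ (m - r))%N%:Z * (sgn s * (g ^ k * q ^ i)%N%:Z) by rewrite !PoszM; ring.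
    rewrite e1 e2 in h; have h' := unlift_mod rm l0 h.
    have [es ek] := uniq_r pl ol clq m0 hf cgl og r0 rm hk hk' h'.
    by move: ne; rewrite es ek eqxx.
move=> t; case: (eqVneq t 0) => [->|t0]; first by left => x.
right.
have tN : (val t < l ^ m)%N by rewrite -[X in (_ < X)%N](Zp_cast N1) ltn_ord.
have v0 : (0 < val t)%N.
  rewrite lt0n; apply: contra t0 => /eqP h; apply/eqP; exact: val_inj.
have [u cu hv] := pfactor_coprime pl v0.
set e := logn l (val t) in hv.
have u0 : (0 < u)%N by move: v0; rewrite hv muln_gt0 => /andP [].
have em : (e < m)%N.
  rewrite -(ltn_exp2l _ _ l1); apply: leq_ltn_trans tN.
  by rewrite hv leq_pmull.
set r := (m - e)%N.
have r0 : (0 < r)%N by rewrite subn_gt0.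
have rm : (r <= m)%N := leq_subr _ _.
have me : (m - r)%N = e by rewrite subKn // ltnW.
have cu' : coprime u l by rewrite coprime_sym.
have [k [s [i [hk hc]]]] := cover_r pl ol clq m0 hf cgl og r0 rm cu'.
exists r, k, s; split; first by rewrite /valid_idx r0 rm divn2 hk.
apply: same_set_sym; apply: (@coset_sym _ q _ _ (ordmod (l ^ m) q) i (ltn0Sn _) hQ).
rewrite /R RQ_int -[t in LHS]natr_Zp; apply/eqP; rewrite [X in X == _]pmulrn Zp_intE // hv me.
have := @lift_mod l m r 1 _ _ rm hc; rewrite me.
have eL : 1 * (l ^ e)%N%:Z * u%:Z = (u * l ^ e)%N%:Z by rewrite PoszM; ring.
have eR : 1 * (l ^ e)%N%:Z * (sgn s * (g ^ k * q ^ i)%N%:Z)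
  = sgn s * (l ^ e * g ^ k)%N%:Z * (q ^ i)%N%:Z by rewrite !PoszM; ring.
by rewrite eL eR.
Qed.
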